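(* Let $A$ be a densely defined closed operator in a complex Hilbert space $\mathcal{H}$ such that $\operatorname{Num}(A)$ has an interior point and $\operatorname{Num}(A)\neq\mathbb{C}$. Let $\lambda\in\partial\operatorname{Num}(A)$ be a point of infinite upper curvature of $\partial\overline{\operatorname{Num}}(A)$. If $\lambda\in\operatorname{Num}(A)$, then $\lambda$ is an eigenvalue of $A$.
   Context: $\operatorname{Num}(A)=\{\langle Af,f\rangle: f\in\operatorname{D}(A),\|f\|=1\}$ is the numerical range (a convex set), $\overline{\operatorname{Num}}(A)$ its closure. Curvature conventions. Let $\Omega\subset\mathbb{C}$ be a closed convex set with nonempty interior and $\lambda\in\partial\Omega$. There is at least one supporting line of $\Omega$ through $\lambda$; $\lambda$ is called a corner point if there is more than one. If $\lambda$ is a corner point, $\Omega$ lies in a closed sector with vertex $\lambda$ and semivertical angle $<\pi/2$; take the smallest such sector and let $l_\lambda$ be the supporting line through $\lambda$ orthogonal to the axis of this sector; otherwise $l_\lambda$ is the unique supporting line. Use rectangular coordinates $(\xi,\eta)$ with origin at $\lambda$, $\xi$-axis equal to $l_\lambda$, oriented so that $\Omega\subset\{\eta\ge 0\}$. Let $D'_\varepsilon=\{(\xi,\eta):\xi^2+\eta^2\le\varepsilon^2,\ \xi\neq 0\}$. Define $\gamma_u^+(\lambda)=\lim_{\varepsilon\downarrow 0}\sup\{\eta/\xi^2:(\xi,\eta)\in\partial\Omega\cap D'_\varepsilon,\ \xi>0\}$ and $\gamma_l^+(\lambda)$ the same with $\inf$ in place of $\sup$; $\gamma_u^-(\lambda),\gamma_l^-(\lambda)$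 are defined analogously with $\xi<0$. Set $\gamma_u(\lambda)=\max(\gamma_u^+(\lambda),\gamma_u^-(\lambda))$, $\gamma_l(\lambda)=\min(\gamma_l^+(\lambda),\gamma_l^-(\lambda))$. The point $\lambda$ is of infinite upper curvature if $\gamma_u(\lambda)=\infty$, and of unilateral infinite curvature if $\gamma_l^+(\lambda)=\infty$ or $\gamma_l^-(\lambda)=\infty$. For an operator $A$, these notions at $\lambda\in\partial\operatorname{Num}(A)$ refer to $\Omega=\overline{\operatorname{Num}}(A)$. *)

(* Defs.v *)
From Stdlib Require Import Reals Lra.
Open Scope R_scope.

Record Cx := mkC { Re : R; Im : R }.
Definition Cadd (z w : Cx) : Cx := mkC (Re z + Re w) (Im z + Im w).
Definition Copp (z : Cx) : Cx := mkC (- Re z) (- Im z).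
Definition Csub (z w : Cx) : Cx := Cadd z (Copp w).
Definition Cmul (z w : Cx) : Cx :=
  mkC (Re z * Re w - Im z * Im w) (Re z * Im w + Im z * Re w).
Definition Cconj (z : Cx) : Cx := mkC (Re z) (- Im z).
Definition C0 : Cx := mkC 0 0.
Definition C1 : Cx := mkC 1 0.
Definition Cabs (z : Cx) : R := sqrt (Re z * Re z + Im z * Im z).

Record CHilbert := {
  hs :> Type;
  hadd : hs -> hs -> hs;
  hzero : hs;
  hopp : hs -> hs;
  hscal : Cx -> hs -> hs;
  hinner : hs -> hs -> Cx;            (* linear in the first argument *)
  haddA : forall x y z, hadd x (hadd y z) = hadd (hadd x y) z;
  haddC : forall x y, hadd x y = hadd y x;
  hadd0 : forall x, hadd x hzero = x;
  haddN : forall x, hadd x (hopp x) = hzero;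
  hscalA : forall a b x, hscal a (hscal b x) = hscal (Cmul a b) x;
  hscal1 : forall x, hscal C1 x = x;
  hscalDr : forall a x y, hscal a (hadd x y) = hadd (hscal a x) (hscal a y);
  hscalDl : forall a b x, hscal (Cadd a b) x = hadd (hscal a x) (hscal b x);
  hinnerDl : forall x y z, hinner (hadd x y) z = Cadd (hinner x z) (hinner y z);
  hinnerZl : forall a x y, hinner (hscal a x) y = Cmul a (hinner x y);
  hinner_conj : forall x y, hinner y x = Cconj (hinner x y);
  hinner_pos : forall x, 0 <= Re (hinner x x);
  hinner_def : forall x, hinner x x = C0 -> x = hzero;
  hcomplete : forall u : nat -> hs,
    (forall eps, 0 < eps -> exists N, forall n m, (N <= n)%nat -> (N <= m)%nat ->
        sqrt (Re (hinner (hadd (u n) (hopp (u m))) (hadd (u n) (hopp (u m))))) < eps) ->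
    exists x, forall eps, 0 < eps -> exists N, forall n, (N <= n)%nat ->
        sqrt (Re (hinner (hadd (u n) (hopp x)) (hadd (u n) (hopp x)))) < eps
}.

Arguments hadd {_}. Arguments hzero {_}. Arguments hopp {_}.
Arguments hscal {_}. Arguments hinner {_}.

Definition hnorm {H : CHilbert} (x : H) : R := sqrt (Re (hinner x x)).
Definition hsub {H : CHilbert} (x y : H) : H := hadd x (hopp y).

Definition hconverges {H : CHilbert} (u : nat -> H) (x : H) : Prop :=
  forall eps, 0 < eps -> exists N, forall n, (N <= n)%nat -> hnorm (hsub (u n) x) < eps.

(* ---------- (Unbounded) operators: domain D, action A (only meaningful on D) ---------- *)
Definition is_subspace {H : CHilbert} (D : H -> Prop) : Prop :=
  D hzero /\ (forall x y, D x -> D y -> D (hadd x y)) /\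
  (forall a x, D x -> D (hscal a x)).

Definition linear_on {H : CHilbert} (D : H -> Prop) (A : H -> H) : Prop :=
  (forall x y, D x -> D y -> A (hadd x y) = hadd (A x) (A y)) /\
  (forall a x, D x -> A (hscal a x) = hscal a (A x)).

Definition hdense {H : CHilbert} (D : H -> Prop) : Prop :=
  forall x eps, 0 < eps -> exists y, D y /\ hnorm (hsub x y) < eps.

Definition closed_op {H : CHilbert} (D : H -> Prop) (A : H -> H) : Prop :=
  forall (u : nat -> H) x y, (forall n, D (u n)) ->
    hconverges u x -> hconverges (fun n => A (u n)) y -> D x /\ A x = y.

Definition densely_defined_closed_operator {H : CHilbert} (D : H -> Prop) (A : H -> H) : Prop :=
  is_subspace D /\ linear_on D A /\ hdense D /\ closed_op D A.

Definition eigenvalue {H : CHilbert} (D : H -> Prop) (A : H -> H) (l : Cx) : Prop :=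
  exists f, D f /\ f <> hzero /\ A f = hscal l f.

Definition Num {H : CHilbert} (D : H -> Prop) (A : H -> H) (z : Cx) : Prop :=
  exists f, D f /\ hnorm f = 1 /\ hinner (A f) f = z.

Definition Ccl (S : Cx -> Prop) (z : Cx) : Prop :=
  forall eps, 0 < eps -> exists w, S w /\ Cabs (Csub w z) < eps.
Definition Cinterior (S : Cx -> Prop) (z : Cx) : Prop :=
  exists eps, 0 < eps /\ forall w, Cabs (Csub w z) < eps -> S w.
Definition Cboundary (S : Cx -> Prop) (z : Cx) : Prop := Ccl S z /\ ~ Cinterior S z.

(* The line through l with unit normal n supports Om, Om lying on the side n points to. *)
Definition supp_normal (Om : Cx -> Prop) (l n : Cx) : Prop :=
  Cabs n = 1 /\ forall w, Om w -> 0 <= Re (Cmul (Csub w l) (Cconj n)).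

(* The lines with unit normals n1, n2 through l coincide iff n1 = n2 or n1 = -n2.
   l is a corner point iff there are two distinct supporting lines through l. *)
Definition corner_point (Om : Cx -> Prop) (l : Cx) : Prop :=
  exists n1 n2, supp_normal Om l n1 /\ supp_normal Om l n2 /\ n1 <> n2 /\ n1 <> Copp n2.

(* Closed sector with vertex l, unit axis direction u and semivertical angle th. *)
Definition sector (l u : Cx) (th : R) (w : Cx) : Prop :=
  Cabs (Csub w l) * cos th <= Re (Cmul (Csub w l) (Cconj u)).

(* u is the unit vector along the eta-axis (orthogonal to l_lambda, pointing into Om). *)
Definition eta_direction (Om : Cx -> Prop) (l u : Cx) : Prop :=
  Cabs u = 1 /\
  (corner_point Om l ->
     exists th, 0 <= th < PI / 2 /\ (forall w, Om w -> sector l u th w) /\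
       forall u' th', Cabs u' = 1 -> 0 <= th' < PI / 2 ->
         (forall w, Om w -> sector l u' th' w) ->
         forall w, sector l u th w -> sector l u' th' w) /\
  (~ corner_point Om l -> supp_normal Om l u).

(* Coordinates of w: w - l = (eta + i xi) * u, i.e. eta along u, xi along l_lambda. *)
Definition eta_c (l u w : Cx) : R := Re (Cmul (Csub w l) (Cconj u)).
Definition xi_c (l u w : Cx) : R := Im (Cmul (Csub w l) (Cconj u)).

(* gamma_u^+(l) = infinity  (the sup over D'_eps with xi>0 is +infinity for every eps > 0,
   since these sups decrease as eps decreases). *)
Definition gamma_u_plus_infinite (Om : Cx -> Prop) (l u : Cx) : Prop :=
  forall M eps, 0 < eps -> exists w, Cboundary Om w /\
    0 < xi_c l u w /\ (xi_c l u w)^2 + (eta_c l u w)^2 <= eps^2 /\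
    M < eta_c l u w / (xi_c l u w)^2.

Definition gamma_u_minus_infinite (Om : Cx -> Prop) (l u : Cx) : Prop :=
  forall M eps, 0 < eps -> exists w, Cboundary Om w /\
    xi_c l u w < 0 /\ (xi_c l u w)^2 + (eta_c l u w)^2 <= eps^2 /\
    M < eta_c l u w / (xi_c l u w)^2.

Definition infinite_upper_curvature (Om : Cx -> Prop) (l : Cx) : Prop :=
  exists u, eta_direction Om l u /\
    (gamma_u_plus_infinite Om l u \/ gamma_u_minus_infinite Om l u).

(* Main.v *)
From Stdlib Require Import Reals Lra Psatz Classical.
Require Import Defs.
Open Scope R_scope.

Lemma Cx_ext (z w : Cx) : Re z = Re w -> Im z = Im w -> z = w.
Proof. destruct z, w; simpl; intros; subst; reflexivity. Qed.

Ltac cx := apply Cx_ext; simpl; ring.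

Section Hil.
Variable H : CHilbert.

Lemma inner0l (y : H) : hinner hzero y = C0.
Proof.
  pose proof (hinnerDl H hzero hzero y) as E. rewrite hadd0 in E.
  apply Cx_ext; [apply (f_equal Re) in E | apply (f_equal Im) in E]; simpl in *; lra.
Qed.

Lemma innerDr (x y z : H) : hinner x (hadd y z) = Cadd (hinner x y) (hinner x z).
Proof.
  rewrite (hinner_conj H (hadd y z) x), hinnerDl, (hinner_conj H y x), (hinner_conj H z x). cx.
Qed.

Lemma innerZr (a : Cx) (x y : H) : hinner x (hscal a y) = Cmul (Cconj a) (hinner x y).
Proof.
  rewrite (hinner_conj H (hscal a y) x), hinnerZl, (hinner_conj H y x). cx.
Qed.

Lemma inner0r (y : H) : hinner y hzero = C0.
Proof. rewrite (hinner_conj H hzero y), inner0l. cx. Qed.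

Lemma inner_oppl (x y : H) : hinner (hopp x) y = Copp (hinner x y).
Proof.
  pose proof (hinnerDl H x (hopp x) y) as E. rewrite haddN, inner0l in E.
  apply Cx_ext; [apply (f_equal Re) in E | apply (f_equal Im) in E]; simpl in *; lra.
Qed.

Lemma inner_oppr (x y : H) : hinner y (hopp x) = Copp (hinner y x).
Proof. rewrite (hinner_conj H (hopp x) y), inner_oppl, (hinner_conj H x y). cx. Qed.

Lemma inner_real (x : H) : Im (hinner x x) = 0.
Proof. pose proof (hinner_conj H x x) as E. apply (f_equal Im) in E. simpl in E. lra. Qed.

Lemma inner_pos_ne (x : H) : x <> hzero -> 0 < Re (hinner x x).
Proof.
  intro Hx. destruct (Rle_lt_or_eq_dec _ _ (hinner_pos H x)) as [h|h]; auto.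
  exfalso. apply Hx, hinner_def. apply Cx_ext; simpl; auto using inner_real.
Qed.

Lemma sub0_eq (x y : H) : hadd x (hopp y) = hzero -> x = y.
Proof.
  intro E.
  transitivity (hadd (hadd x (hopp y)) y).
  - rewrite <- haddA, (haddC H (hopp y) y), haddN, hadd0. reflexivity.
  - rewrite E, haddC, hadd0. reflexivity.
Qed.

End Hil.

Section Op.
Variable H : CHilbert.
Variable D : H -> Prop.
Variable A : H -> H.
Hypothesis HS : is_subspace D.
Hypothesis HL : linear_on D A.

Lemma D_comb a b x y : D x -> D y -> D (hadd (hscal a x) (hscal b y)).
Proof. destruct HS as [_ [Ha Hs]]. intros; apply Ha; apply Hs; auto. Qed.

Lemma A_comb a b x y : D x -> D y ->
  A (hadd (hscal a x) (hscal b y)) = hadd (hscal a (A x)) (hscal b (A y)).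
Proof.
  destruct HS as [_ [Ha Hs]]. destruct HL as [La Ls]. intros.
  rewrite La by (apply Hs; auto). rewrite !Ls by auto. reflexivity.
Qed.

Lemma inner_comb a b (x1 x2 y1 y2 : H) :
  hinner (hadd (hscal a x1) (hscal b x2)) (hadd (hscal a y1) (hscal b y2)) =
  Cadd (Cadd (Cmul (Cmul a (Cconj a)) (hinner x1 y1)) (Cmul (Cmul a (Cconj b)) (hinner x1 y2)))
       (Cadd (Cmul (Cmul b (Cconj a)) (hinner x2 y1)) (Cmul (Cmul b (Cconj b)) (hinner x2 y2))).
Proof.
  rewrite !hinnerDl, !innerDr, !hinnerZl, !innerZr. cx.
Qed.

Lemma A0_inner y : hinner (A hzero) y = C0.
Proof.
  destruct HS as [H0 _]. destruct HL as [La _].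
  pose proof (La hzero hzero H0 H0) as E. rewrite hadd0 in E.
  pose proof (f_equal (fun v => hinner v y) E) as E2. simpl in E2.
  rewrite hinnerDl in E2.
  apply Cx_ext; [apply (f_equal Re) in E2 | apply (f_equal Im) in E2]; simpl in *; lra.
Qed.

Lemma num_pt h : D h -> h <> hzero ->
  Num D A (Cmul (mkC (/ Re (hinner h h)) 0) (hinner (A h) h)).
Proof.
  intros Dh Hh. pose proof (inner_pos_ne H h Hh) as Hp.
  pose proof (inner_real H h) as Hi.
  set (r := Re (hinner h h)) in *.
  destruct HS as [_ [_ Hs]]. destruct HL as [_ Ls].
  exists (hscal (mkC (/ sqrt r) 0) h). split; [auto|split].
  - unfold hnorm. rewrite hinnerZl, innerZr. simpl.
    assert (Hq: sqrt r * sqrt r = r) by (apply sqrt_sqrt; lra).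
    assert (Hsp: 0 < sqrt r) by (apply sqrt_lt_R0; lra).
    match goal with |- sqrt ?e = 1 => replace e with 1 end.
    + apply sqrt_1.
    + fold r. rewrite Hi. field_simplify; [|lra]. rewrite pow2_sqrt by lra. field. lra.
  - rewrite Ls by auto. rewrite hinnerZl, innerZr.
    assert (E: / r = / sqrt r * / sqrt r).
    { rewrite <- Rinv_mult, sqrt_sqrt; lra. }
    rewrite E. cx.
Qed.

End Op.

Lemma cnorm_pos (w : Cx) : w <> C0 -> 0 < Re w * Re w + Im w * Im w.
Proof.
  intro Hw. destruct w as [a b]; simpl.
  destruct (Req_dec a 0); destruct (Req_dec b 0); subst; try nra.
  exfalso; apply Hw; reflexivity.
Qed.

Lemma omega_ex (P R : Cx) : exists w, w <> C0 /\ Im (Cmul (Cconj w) (Csub P (Cconj R))) = 0.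
Proof.
  destruct (classic (Csub P (Cconj R) = C0)) as [E|E].
  - exists C1. split. + intro h; injection h; lra. + rewrite E. simpl. ring.
  - exists (Csub P (Cconj R)). split; auto. simpl. ring.
Qed.

Lemma alg4 (ar : R) (b e k z1 z2 : Cx) : ar <> 0 ->
  Cadd (Cmul (mkC ar 0) C1) (Cmul b (Cconj e)) = C0 ->
  Cadd (Cmul (mkC ar 0) e) (Cmul b C1) = C0 ->
  Cadd (Cmul (mkC ar 0) z1) (Cmul b k) = C0 ->
  Cadd (Cmul (mkC ar 0) (Cconj k)) (Cmul b (Cconj z2)) = C0 -> z1 = z2.
Proof.
  destruct b as [b1 b2], e as [e1 e2], k as [k1 k2], z1 as [p1 p2], z2 as [q1 q2].
  intros Har E1 E2 E3 E4.
  injection E1; injection E2; injection E3; injection E4; simpl; intros.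
  assert (B1: b1 = - ar * e1) by lra. assert (B2: b2 = - ar * e2) by lra. subst b1 b2.
  assert (N: e1*e1 + e2*e2 = 1).
  { apply (Rmult_eq_reg_l ar); [|auto]. nra. }
  assert (K1: k1 = e1*q1 + e2*q2) by (apply (Rmult_eq_reg_l ar); [nra|auto]).
  assert (K2: k2 = e1*q2 - e2*q1) by (apply (Rmult_eq_reg_l ar); [nra|auto]).
  assert (P1: p1 = e1*k1 - e2*k2) by (apply (Rmult_eq_reg_l ar); [nra|auto]).
  assert (P2: p2 = e1*k2 + e2*k1) by (apply (Rmult_eq_reg_l ar); [nra|auto]).
  apply Cx_ext; simpl.
  - rewrite P1, K1, K2. transitivity ((e1*e1+e2*e2)*q1); [ring|rewrite N; ring].
  - rewrite P2, K1, K2. transitivity ((e1*e1+e2*e2)*q2); [ring|rewrite N; ring].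
Qed.

Lemma solve2 er ei cr ci p : er*cr+ei*ci = p*(cr*cr+ci*ci) -> ei*cr - er*ci = 0 ->
  0 < cr*cr+ci*ci -> er = p*cr /\ ei = p*ci.
Proof.
  intros H1 H2 Hc. split.
  - apply (Rmult_eq_reg_r (cr*cr+ci*ci)); [|lra].
    transitivity (cr*(er*cr+ei*ci) - ci*(ei*cr - er*ci)); [ring|]. rewrite H1, H2. ring.
  - apply (Rmult_eq_reg_r (cr*cr+ci*ci)); [|lra].
    transitivity (ci*(er*cr+ei*ci) + cr*(ei*cr - er*ci)); [ring|]. rewrite H1, H2. ring.
Qed.

Lemma unit_inner (H : CHilbert) (f : H) : hnorm f = 1 -> hinner f f = C1.
Proof.
  unfold hnorm. intro E. apply Cx_ext; simpl; [|apply inner_real].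
  rewrite <- (sqrt_sqrt (Re (hinner f f))) by apply hinner_pos. rewrite E. ring.
Qed.

Section Seg.
Variable H : CHilbert.
Variable D : H -> Prop.
Variable A : H -> H.
Hypothesis HS : is_subspace D.
Hypothesis HL : linear_on D A.

Lemma num_seg z1 z2 s : Num D A z1 -> Num D A z2 -> 0 <= s <= 1 ->
  Num D A (Cadd z1 (Cmul (mkC s 0) (Csub z2 z1))).
Proof.
  intros N1 N2 Hs.
  destruct (Req_dec s 0) as [->|Hs0].
  { replace (Cadd z1 (Cmul (mkC 0 0) (Csub z2 z1))) with z1 by cx. auto. }
  destruct (Req_dec s 1) as [->|Hs1].
  { replace (Cadd z1 (Cmul (mkC 1 0) (Csub z2 z1))) with z2 by cx. auto. }
  destruct (classic (z1 = z2)) as [<-|Hz].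
  { replace (Cadd z1 (Cmul (mkC s 0) (Csub z1 z1))) with z1 by cx. auto. }
  destruct N1 as [h1 [D1 [U1 Q1]]]. destruct N2 as [h2 [D2 [U2 Q2]]].
  apply unit_inner in U1. apply unit_inner in U2.
  set (c := Csub z2 z1).
  assert (Hc : 0 < Re c * Re c + Im c * Im c).
  { apply cnorm_pos. intro E. apply Hz. unfold c in E.
    destruct z1, z2; injection E; simpl; intros. apply Cx_ext; simpl; lra. }
  set (e := hinner h1 h2).
  assert (E21 : hinner h2 h1 = Cconj e) by apply hinner_conj.
  set (P := Cmul (Csub (hinner (A h1) h2) (Cmul z1 e)) (Cconj c)).
  set (R := Cmul (Csub (hinner (A h2) h1) (Cmul z1 (Cconj e))) (Cconj c)).
  destruct (omega_ex P R) as [w [Hw0 Hw]].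
  pose proof (cnorm_pos w Hw0) as Hwp.
  set (hx := fun x => hadd (hscal (mkC (1-x) 0) h1) (hscal (Cmul (mkC x 0) w) h2)).
  assert (Eq : forall x, hinner (A (hx x)) (hx x) =
    Cadd (Cadd (Cmul (Cmul (mkC (1-x) 0) (Cconj (mkC (1-x) 0))) z1)
               (Cmul (Cmul (mkC (1-x) 0) (Cconj (Cmul (mkC x 0) w))) (hinner (A h1) h2)))
         (Cadd (Cmul (Cmul (Cmul (mkC x 0) w) (Cconj (mkC (1-x) 0))) (hinner (A h2) h1))
               (Cmul (Cmul (Cmul (mkC x 0) w) (Cconj (Cmul (mkC x 0) w))) z2))).
  { intro x. unfold hx. rewrite (A_comb H D A HS HL) by auto. rewrite inner_comb, Q1, Q2. reflexivity. }
  assert (En : forall x, hinner (hx x) (hx x) =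
    Cadd (Cadd (Cmul (Cmul (mkC (1-x) 0) (Cconj (mkC (1-x) 0))) Defs.C1)
               (Cmul (Cmul (mkC (1-x) 0) (Cconj (Cmul (mkC x 0) w))) e))
         (Cadd (Cmul (Cmul (Cmul (mkC x 0) w) (Cconj (mkC (1-x) 0))) (Cconj e))
               (Cmul (Cmul (Cmul (mkC x 0) w) (Cconj (Cmul (mkC x 0) w))) Defs.C1))).
  { intro x. unfold hx. rewrite inner_comb, U1, U2, E21. reflexivity. }
  assert (HIm : forall x, Im (Cmul (Csub (hinner (A (hx x)) (hx x))
                     (Cmul z1 (hinner (hx x) (hx x)))) (Cconj c)) = 0).
  { intro x. rewrite Eq, En.
    transitivity ((1-x)*x * Im (Cmul (Cconj w) (Csub P (Cconj R)))).
    - unfold P, R, c. simpl. ring.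
    - rewrite Hw. ring. }
  set (cc := Re c * Re c + Im c * Im c) in *.
  set (EQ := fun x => Cadd (Cadd (Cmul (Cmul (mkC (1-x) 0) (Cconj (mkC (1-x) 0))) z1)
               (Cmul (Cmul (mkC (1-x) 0) (Cconj (Cmul (mkC x 0) w))) (hinner (A h1) h2)))
         (Cadd (Cmul (Cmul (Cmul (mkC x 0) w) (Cconj (mkC (1-x) 0))) (hinner (A h2) h1))
               (Cmul (Cmul (Cmul (mkC x 0) w) (Cconj (Cmul (mkC x 0) w))) z2))).
  set (EN := fun x => Cadd (Cadd (Cmul (Cmul (mkC (1-x) 0) (Cconj (mkC (1-x) 0))) Defs.C1)
               (Cmul (Cmul (mkC (1-x) 0) (Cconj (Cmul (mkC x 0) w))) e))
         (Cadd (Cmul (Cmul (Cmul (mkC x 0) w) (Cconj (mkC (1-x) 0))) (Cconj e))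
               (Cmul (Cmul (Cmul (mkC x 0) w) (Cconj (Cmul (mkC x 0) w))) Defs.C1))).
  set (phi := fun x => Re (Cmul (Csub (EQ x) (Cmul z1 (EN x))) (Cconj c)) - s * cc * Re (EN x)).
  assert (Hcont : continuity phi).
  { apply derivable_continuous. unfold phi, EQ, EN. simpl. reg. }
  assert (Hp0 : phi 0 = - s * cc).
  { unfold phi, EQ, EN, cc. simpl. ring. }
  assert (Hp1 : phi 1 = (1 - s) * cc * (Re w * Re w + Im w * Im w)).
  { unfold phi, EQ, EN, cc, c. simpl. ring. }
  destruct (IVT_cor phi 0 1 Hcont) as [x [Hx Hphi]].
  { lra. }
  { rewrite Hp0, Hp1. assert (0 < cc * (Re w * Re w + Im w * Im w)) by nra. nra. }
  assert (Hnz : hx x <> hzero).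
  { intro Z.
    assert (Z1 : forall y, hinner (hx x) y = C0) by (intro y; rewrite Z; apply inner0l).
    assert (Z2 : forall y, hinner (A (hx x)) y = C0) by (intro y; rewrite Z; apply (A0_inner H D A HS HL)).
    assert (Enx : hinner (hx x) (hx x) = EN x) by (rewrite En; reflexivity).
    destruct (Req_dec x 0) as [->|Hx0].
    { pose proof (Z1 (hx 0)) as F. rewrite Enx in F. apply (f_equal Re) in F.
      unfold EN in F. simpl in F. lra. }
    destruct (Req_dec x 1) as [->|Hx1].
    { pose proof (Z1 (hx 1)) as F. rewrite Enx in F. apply (f_equal Re) in F.
      unfold EN in F. simpl in F. nra. }
    apply Hz. apply (alg4 (1-x) (Cmul (mkC x 0) w) e (hinner (A h2) h1) z1 z2).
    - lra.
    - pose proof (Z1 h1) as F. unfold hx in F. rewrite hinnerDl, !hinnerZl, U1, E21 in F. exact F.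
    - pose proof (Z1 h2) as F. unfold hx in F. rewrite hinnerDl, !hinnerZl, U2 in F. exact F.
    - pose proof (Z2 h1) as F. unfold hx in F. rewrite (A_comb H D A HS HL) in F by auto.
      rewrite hinnerDl, !hinnerZl, Q1 in F. exact F.
    - pose proof (Z1 (A h2)) as F. unfold hx in F. rewrite hinnerDl, !hinnerZl in F.
      rewrite (hinner_conj H (A h2) h1), (hinner_conj H (A h2) h2), Q2 in F. exact F. }
  assert (Dx : D (hx x)) by (unfold hx; apply (D_comb H D HS); auto).
  pose proof (num_pt H D A HS HL (hx x) Dx Hnz) as NP.
  pose proof (inner_pos_ne H (hx x) Hnz) as Hn.
  pose proof (inner_real H (hx x)) as Hni.
  assert (EqX : hinner (A (hx x)) (hx x) = EQ x) by (rewrite Eq; reflexivity).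
  assert (EnX : hinner (hx x) (hx x) = EN x) by (rewrite En; reflexivity).
  pose proof (HIm x) as Hi.
  unfold phi in Hphi. rewrite <- EqX, <- EnX in Hphi.
  set (qq := hinner (A (hx x)) (hx x)) in *.
  set (nn := hinner (hx x) (hx x)) in *.
  assert (W1 : Re (Cmul (Csub qq (Cmul z1 nn)) (Cconj c)) =
     (Re qq - Re z1*Re nn)*Re c + (Im qq - Im z1*Re nn)*Im c) by (simpl; rewrite Hni; ring).
  assert (W2 : Im (Cmul (Csub qq (Cmul z1 nn)) (Cconj c)) =
     (Im qq - Im z1*Re nn)*Re c - (Re qq - Re z1*Re nn)*Im c) by (simpl; rewrite Hni; ring).
  rewrite W1 in Hphi. rewrite W2 in Hi.
  set (n := Re nn) in *.
  destruct (solve2 (Re qq - Re z1 * n) (Im qq - Im z1 * n) (Re c) (Im c) (s * n)) as [S1 S2].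
  { fold cc. lra. }
  { lra. }
  { exact Hc. }
  replace (Cadd z1 (Cmul (mkC s 0) c)) with (Cmul (mkC (/ n) 0) qq); [exact NP|].
  apply Cx_ext; simpl.
  - replace (Re qq) with (s * n * Re c + Re z1 * n) by lra. unfold c; simpl. field. lra.
  - replace (Im qq) with (s * n * Im c + Im z1 * n) by lra. unfold c; simpl. field. lra.
Qed.
End Seg.

Definition convexS (S : R -> R -> Prop) := forall x1 y1 x2 y2 s, S x1 y1 -> S x2 y2 -> 0 <= s <= 1 ->
  S (x1 + s*(x2-x1)) (y1 + s*(y2-y1)).

Lemma tri_convex S (conv : convexS S) ax ay bx by' cx cy vx vy wa wb wc :
  S ax ay -> S bx by' -> S cx cy -> 0 < wa -> 0 < wb -> 0 < wc ->
  wa*ax + wb*bx + wc*cx = (wa+wb+wc)*vx -> wa*ay+wb*by'+wc*cy = (wa+wb+wc)*vy -> S vx vy.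
Proof.
  intros Sa Sb Sc Ha Hb Hc Ex Ey.
  set (s1 := wc/(wa+wc)).
  assert (Q : S (ax + s1*(cx-ax)) (ay + s1*(cy-ay))).
  { apply conv; auto. unfold s1; split; [apply Rmult_le_pos; [lra|left; apply Rinv_0_lt_compat; lra]|].
    apply Rmult_le_reg_r with (wa+wc); [lra|]. unfold Rdiv. rewrite Rmult_assoc, Rinv_l; lra. }
  set (s2 := wb/(wa+wb+wc)).
  assert (Hs2 : 0 <= s2 <= 1).
  { unfold s2; split; [apply Rmult_le_pos; [lra|left; apply Rinv_0_lt_compat; lra]|].
    apply Rmult_le_reg_r with (wa+wb+wc); [lra|]. unfold Rdiv. rewrite Rmult_assoc, Rinv_l; lra. }
  pose proof (conv _ _ _ _ s2 Q Sb Hs2) as F.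
  replace vx with ((ax + s1 * (cx - ax)) + s2 * (bx - (ax + s1 * (cx - ax)))).
  replace vy with ((ay + s1 * (cy - ay)) + s2 * (by' - (ay + s1 * (cy - ay)))).
  exact F.
  - apply (Rmult_eq_reg_l (wa+wb+wc)); [|lra]. rewrite <- Ey. unfold s1, s2. field. lra.
  - apply (Rmult_eq_reg_l (wa+wb+wc)); [|lra]. rewrite <- Ex. unfold s1, s2. field. lra.
Qed.

Lemma affine_pos s a b : 0 < s -> exists r, 0 < r /\
  forall dx dy, Rabs dx < r -> Rabs dy < r -> 0 < s + a*dx + b*dy.
Proof.
  intro Hs. exists (s / (Rabs a + Rabs b + 1)).
  assert (Hd : 0 < Rabs a + Rabs b + 1) by (pose proof (Rabs_pos a); pose proof (Rabs_pos b); lra).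
  split; [apply Rdiv_lt_0_compat; lra|].
  intros dx dy Hx Hy.
  assert (Hax : Rabs (a*dx) <= Rabs a * (s / (Rabs a + Rabs b + 1))).
  { rewrite Rabs_mult. apply Rmult_le_compat_l; [apply Rabs_pos|lra]. }
  assert (Hby : Rabs (b*dy) <= Rabs b * (s / (Rabs a + Rabs b + 1))).
  { rewrite Rabs_mult. apply Rmult_le_compat_l; [apply Rabs_pos|lra]. }
  assert (Hsum : (Rabs a + Rabs b) * (s / (Rabs a + Rabs b + 1)) < s).
  { apply Rmult_lt_reg_r with (Rabs a + Rabs b + 1); [lra|].
    unfold Rdiv. rewrite Rmult_assoc, (Rmult_assoc s), Rinv_l by lra. nra. }
  pose proof (Rle_abs (-(a*dx))). pose proof (Rle_abs (-(b*dy))).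
  rewrite Rabs_Ropp in *. nra.
Qed.

Lemma curve_bd l0 m k G tau : 0 < l0 -> 0 < G -> Rabs tau <= 1 -> Rabs tau * (Rabs m + 1) <= l0/2 ->
  tau * ((tau*l0 + tau*tau*m)/(1+tau*tau*G)) >= l0/(2*(1+G)) * (tau*tau) /\
  Rabs ((tau*l0 + tau*tau*m)/(1+tau*tau*G)) <= (l0 + Rabs m) * Rabs tau /\
  Rabs (tau*tau*k/(1+tau*tau*G)) <= (Rabs k + 1)*(tau*tau).
Proof.
  intros Hl HG Ht1 Ht2.
  set (Dn := 1 + tau*tau*G).
  assert (Hsq : tau*tau = Rabs tau * Rabs tau) by (rewrite <- Rabs_mult, Rabs_pos_eq; nra).
  assert (HD1 : 1 <= Dn) by (unfold Dn; nra).
  pose proof (Rabs_pos tau). assert (Ht : tau*tau <= 1) by nra.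
  assert (HD2 : Dn <= 1 + G) by (unfold Dn; nra).
  set (xt := (tau*l0 + tau*tau*m)/Dn).
  set (yt := tau*tau*k/Dn).
  assert (Ex : xt * Dn = tau*l0 + tau*tau*m) by (unfold xt; field; lra).
  assert (Ey : yt * Dn = tau*tau*k) by (unfold yt; field; lra).
  pose proof (Rabs_pos tau). pose proof (Rabs_pos m). pose proof (Rabs_pos k).
  assert (Hm : Rabs (tau*tau*tau*m) <= Rabs tau * Rabs tau * Rabs tau * Rabs m)
    by (rewrite !Rabs_mult; lra).
  pose proof (Rle_abs (-(tau*tau*tau*m))) as Hm2. rewrite Rabs_Ropp in Hm2.
  repeat split.
  - assert (A1 : tau * xt * Dn >= tau*tau*l0/2).
    { assert (E2 : tau*xt*Dn = tau*tau*l0 + tau*tau*tau*m) by (rewrite Rmult_assoc, Ex; ring). rewrite E2.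
      assert (Rabs tau * Rabs tau * Rabs tau * Rabs m <= Rabs tau * Rabs tau * (l0/2)) by nra.
      nra. }
    assert (A2 : 0 <= tau * xt) by nra.
    apply Rle_ge. apply Rmult_le_reg_r with (2*(1+G)); [lra|].
    replace (l0 / (2 * (1 + G)) * (tau * tau) * (2 * (1 + G))) with (tau*tau*l0) by (field; lra).
    nra.
  - assert (Rabs xt * Dn <= (l0 + Rabs m) * Rabs tau).
    { rewrite <- (Rabs_pos_eq Dn) by lra. rewrite <- Rabs_mult, Ex.
      eapply Rle_trans; [apply Rabs_triang|]. rewrite !Rabs_mult, (Rabs_pos_eq l0) by lra.
      assert (Rabs tau * Rabs tau <= Rabs tau) by nra. nra. }
    pose proof (Rabs_pos xt). nra.
  - assert (Rabs yt * Dn <= (Rabs k + 1) * (tau*tau)).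
    { rewrite <- (Rabs_pos_eq Dn) by lra. rewrite <- Rabs_mult, Ey.
      rewrite !Rabs_mult, <- Hsq. nra. }
    pose proof (Rabs_pos yt). nra.
Qed.

Lemma abs_sub_le a b A B : Rabs a <= A -> Rabs b <= B -> Rabs (a - b) <= A + B.
Proof. intros. unfold Rminus. eapply Rle_trans; [apply Rabs_triang|]. rewrite Rabs_Ropp. lra. Qed.

Lemma prod_abs a b A B : Rabs a <= A -> Rabs b <= B -> Rabs (a*b) <= A*B.
Proof. intros. rewrite Rabs_mult. apply Rmult_le_compat; auto using Rabs_pos. Qed.

Lemma abs_lb u U : Rabs u <= U -> - U <= u.
Proof. intros. pose proof (Rle_abs (-u)). rewrite Rabs_Ropp in *. lra. Qed.

Lemma prod_lb a b a0 b0 : 0 <= a0 -> a0 <= a -> 0 <= b0 -> b0 <= b -> a0*b0 <= a*b.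
Proof. intros. apply Rmult_le_compat; auto. Qed.

Lemma geo S (conv : convexS S) l0 m k G X Y :
  0 < l0 -> 0 < G -> 0 < Y ->
  (forall t, S ((t*l0 + t*t*m)/(1+t*t*G)) (t*t*k/(1+t*t*G))) -> S X Y ->
  exists M eps, 0 < eps /\ forall x y, x <> 0 -> x*x + y*y <= eps*eps -> M*(x*x) < y ->
    exists r, 0 < r /\ forall x' y', (x'-x)*(x'-x) + (y'-y)*(y'-y) < r*r -> S x' y'.
Proof.
  intros Hl HG HY Hcur SZ.
  set (K := Rabs k + 1). set (L1 := l0 + Rabs m). set (L0 := l0/(2*(1+G))).
  set (XA := Rabs X). set (t0 := Rmin 1 (l0/(2*(Rabs m + 1)))).
  assert (HK : 1 <= K) by (unfold K; pose proof (Rabs_pos k); lra).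
  assert (HL1 : 0 < L1) by (unfold L1; pose proof (Rabs_pos m); lra).
  assert (HL0 : 0 < L0) by (unfold L0; apply Rdiv_lt_0_compat; lra).
  assert (HXA : 0 <= XA) by apply Rabs_pos.
  assert (Ht0 : 0 < t0) by (unfold t0; apply Rmin_glb_lt; [lra|apply Rdiv_lt_0_compat; pose proof (Rabs_pos m); lra]).
  set (C := (2*(2*(XA+L1)+1)/Y + 1)/L0).
  assert (HC1 : L0*C = 2*(2*(XA+L1)+1)/Y + 1) by (unfold C; field; lra).
  assert (HC1' : 0 < 2*(2*(XA+L1)+1)/Y) by (apply Rdiv_lt_0_compat; lra).
  assert (HC : 0 < C) by (unfold C; apply Rdiv_lt_0_compat; lra).
  set (T := 2*L0*K*(C*C*C) + 2*K*(C*C) + 2*K*L1*(C*C*C)).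
  assert (HC2 : 0 < C*C) by nra. assert (HC3 : 0 < C*C*C) by nra.
  assert (HT : 0 < T).
  { assert (0 < K*L1) by (apply Rmult_lt_0_compat; lra). assert (0 < L0*K) by (apply Rmult_lt_0_compat; lra).
    assert (0 < L0*K*(C*C*C)) by (apply Rmult_lt_0_compat; lra). assert (0 < K*L1*(C*C*C)) by (apply Rmult_lt_0_compat; lra).
    assert (0 < K*(C*C)) by (apply Rmult_lt_0_compat; lra). unfold T. lra. }
  assert (HKC : 0 < K*C*C) by (apply Rmult_lt_0_compat; [apply Rmult_lt_0_compat|]; lra).
  assert (HLC : 0 < 2*L0*C) by (apply Rmult_lt_0_compat; [apply Rmult_lt_0_compat|]; lra).
  set (Ga := T/(2*L0*C) + K*C*C).
  assert (HGa1 : T <= 2*L0*C*Ga).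
  { unfold Ga. rewrite Rmult_plus_distr_l. replace (2*L0*C*(T/(2*L0*C))) with T by (field; lra).
    assert (0 < 2*L0*C*(K*C*C)) by (apply Rmult_lt_0_compat; lra). lra. }
  assert (HTd : 0 < T/(2*L0*C)) by (apply Rdiv_lt_0_compat; lra).
  assert (HGa : 0 < Ga) by (unfold Ga; nra).
  assert (HGa2 : K*C*C <= Ga) by (unfold Ga; lra).
  exists (4*Ga+1).
  set (eps := Rmin (Rmin (1/2) (t0/(2*C))) (Rmin (Rmin (1/(2*K*C*C)) (Y/(4*K*C*C))) (1/(4*Ga+1)))).
  assert (E1 : eps <= 1/2) by (unfold eps; eapply Rle_trans; [apply Rmin_l|apply Rmin_l]).
  assert (E2 : eps <= t0/(2*C)) by (unfold eps; eapply Rle_trans; [apply Rmin_l|apply Rmin_r]).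
  assert (E3 : eps <= 1/(2*K*C*C)) by (unfold eps; eapply Rle_trans; [apply Rmin_r|];
     eapply Rle_trans; [apply Rmin_l|apply Rmin_l]).
  assert (E4 : eps <= Y/(4*K*C*C)) by (unfold eps; eapply Rle_trans; [apply Rmin_r|];
     eapply Rle_trans; [apply Rmin_l|apply Rmin_r]).
  assert (E5 : eps <= 1/(4*Ga+1)) by (unfold eps; eapply Rle_trans; [apply Rmin_r|apply Rmin_r]).
  assert (Heps : 0 < eps).
  { unfold eps. repeat apply Rmin_glb_lt; try (apply Rdiv_lt_0_compat); try lra; nra. }
  exists eps. split; [exact Heps|].
  intros x y Hx0 Hxy HM.
  assert (Hxx : 0 < x*x) by (destruct (Rlt_or_le x 0); nra).
  assert (Hy : 0 < y) by nra.
  assert (Hax : Rabs x * Rabs x = x*x) by (rewrite <- Rabs_mult, Rabs_pos_eq; nra).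
  assert (Habx : Rabs x <= eps) by (pose proof (Rabs_pos x); nra).
  assert (Hye : y <= eps) by nra.
  set (rho := Rabs x + y).
  assert (Hrho : 0 < rho) by (unfold rho; pose proof (Rabs_pos x); lra).
  assert (Hrho2 : rho <= 2*eps) by (unfold rho; lra).
  assert (HGr : Ga*(rho*rho) < y).
  { assert (rho*rho <= 2*(x*x) + 2*(y*y)).
    { unfold rho. assert (0 <= (Rabs x - y)*(Rabs x - y)) by apply Rle_0_sqr. rewrite <- Hax. lra. }
    assert (2*Ga*(x*x) <= y/2).
    { assert (Ga*(x*x)*4 <= (4*Ga+1)*(x*x)) by nra. lra. }
    assert (2*Ga*(y*y) < y/2).
    { assert (y*(4*Ga+1) <= 1).
      { apply Rle_trans with (eps*(4*Ga+1)); [nra|].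
        apply Rmult_le_reg_r with (/(4*Ga+1)); [apply Rinv_0_lt_compat; lra|].
        rewrite Rmult_assoc, Rinv_r, Rmult_1_r by lra. lra. }
      nra. }
    nra. }
  set (t := C*rho).
  assert (Htp : 0 < t) by (unfold t; nra).
  assert (Htt0 : t <= t0).
  { unfold t. apply Rle_trans with (C*(2*eps)); [nra|].
    apply Rle_trans with (C*(2*(t0/(2*C)))); [nra|]. right; field; lra. }
  assert (Ht1 : t <= 1) by (apply Rle_trans with t0; [auto|apply Rmin_l]).
  assert (Htm : t*(Rabs m + 1) <= l0/2).
  { assert (t <= l0/(2*(Rabs m+1))) by (apply Rle_trans with t0; [auto|apply Rmin_r]).
    pose proof (Rabs_pos m).
    apply Rmult_le_reg_r with (/(Rabs m + 1)); [apply Rinv_0_lt_compat; lra|].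
    rewrite Rmult_assoc, Rinv_r, Rmult_1_r by lra.
    replace (l0 / 2 * / (Rabs m + 1)) with (l0 / (2 * (Rabs m + 1))) by (field; lra). auto. }
  assert (HKt : K*(t*t) <= rho).
  { unfold t. assert (K*C*C*rho <= 1).
    { apply Rle_trans with (K*C*C*(2*eps)); [nra|].
      apply Rle_trans with (K*C*C*(2*(1/(2*K*C*C)))); [nra|]. right; field; nra. }
    nra. }
  assert (HKtY : K*(t*t) <= Y/2).
  { unfold t. assert (K*C*C*rho <= Y/2).
    { apply Rle_trans with (K*C*C*(2*eps)); [nra|].
      apply Rle_trans with (K*C*C*(2*(Y/(4*K*C*C)))); [nra|]. right; field; nra. }
    assert (rho <= 1) by lra. nra. }
  destruct (curve_bd l0 m k G t Hl HG) as [B1 [B2 B3]].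
  { rewrite Rabs_pos_eq; lra. } { rewrite Rabs_pos_eq; lra. }
  destruct (curve_bd l0 m k G (-t) Hl HG) as [B4 [B5 B6]].
  { rewrite Rabs_Ropp, Rabs_pos_eq; lra. } { rewrite Rabs_Ropp, Rabs_pos_eq; lra. }
  rewrite Rabs_Ropp, (Rabs_pos_eq t) in B5 by lra.
  fold L0 L1 K in B1, B2, B3, B4, B5, B6.
  replace (- t * - t) with (t*t) in B4, B5, B6 by ring.
  set (x1 := (t*l0 + t*t*m)/(1+t*t*G)) in *.
  set (y1 := t*t*k/(1+t*t*G)) in *.
  set (x2 := (-t*l0 + t*t*m)/(1+t*t*G)) in *.
  rewrite (Rabs_pos_eq t) in B2 by lra.
  assert (F1 : x1 >= L0*t).
  { apply Rle_ge. apply Rmult_le_reg_l with t; [lra|]. nra. }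
  assert (F2 : x2 <= - (L0*t)).
  { apply Rmult_le_reg_l with t; [lra|]. lra. }
  assert (Hxr : Rabs x <= rho) by (unfold rho; lra).
  assert (Hyr : Rabs y <= rho) by (rewrite Rabs_pos_eq; unfold rho; pose proof (Rabs_pos x); lra).
  assert (HL0t : L0*t - rho = rho*(2*(2*(XA+L1)+1)/Y)).
  { unfold t. replace (L0*(C*rho)) with ((L0*C)*rho) by ring. rewrite HC1. ring. }
  set (S2f := fun u v => (X-x1)*(v-y1) - (Y-y1)*(u-x1)).
  set (S3f := fun u v => (u-x2)*(Y-y1) - (v-y1)*(X-x2)).
  set (S1f := fun u v => (x1-x2)*(v-y1) - (y1-y1)*(u-x2)).
  assert (Hyy1 : Y/2 <= Y - y1) by (pose proof (abs_lb _ _ B3); pose proof (Rle_abs y1); lra).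
  assert (Hbig : (Y/2)*(L0*t - rho) = rho*(2*(XA+L1)+1)).
  { rewrite HL0t. field. lra. }
  assert (Hpos1 : 0 <= L0*t - rho) by (rewrite HL0t; nra).
  assert (AB1 : Rabs ((X-x1)*(y-y1)) <= (XA+L1)*(2*rho)).
  { apply Rle_trans with ((XA + L1*t)*(rho + K*(t*t))).
    - apply prod_abs; apply abs_sub_le; first [apply Rle_refl | assumption | lra].
    - apply Rmult_le_compat; [nra|nra|nra|lra]. }
  assert (AB2 : Rabs ((y-y1)*(X-x2)) <= (2*rho)*(XA+L1)).
  { apply Rle_trans with ((rho + K*(t*t))*(XA + L1*t)).
    - apply prod_abs; apply abs_sub_le; first [apply Rle_refl | assumption | lra].
    - apply Rmult_le_compat; [nra|nra|lra|nra]. }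
  assert (P2 : 0 < S2f x y).
  { unfold S2f. pose proof (abs_lb _ _ AB1).
    assert ((Y/2)*(L0*t-rho) <= (Y-y1)*(x1-x)).
    { apply prod_lb; try lra. pose proof (Rle_abs x). lra. }
    nra. }
  assert (P3 : 0 < S3f x y).
  { unfold S3f. pose proof (Rle_abs ((y-y1)*(X-x2))).
    assert ((L0*t-rho)*(Y/2) <= (x-x2)*(Y-y1)).
    { apply prod_lb; try lra. pose proof (Rle_abs (-x)). rewrite Rabs_Ropp in *. lra. }
    nra. }
  assert (P1 : 0 < S1f x y).
  { unfold S1f.
    assert (HyK : K*(t*t) < y).
    { unfold t. replace (K*(C*rho*(C*rho))) with ((K*C*C)*(rho*rho)) by ring.
      assert (0 < rho*rho) by nra. nra. }
    assert (L1a : (2*L0*t)*(y - K*(t*t)) <= (x1-x2)*(y-y1)).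
    { apply prod_lb; try nra. pose proof (abs_lb _ _ B3). pose proof (Rle_abs y1). lra. }
    assert (L1b : Rabs ((y1-y1)*(x-x2)) <= (2*(K*(t*t)))*(rho + L1*t)).
    { apply prod_abs; [replace (2*(K*(t*t))) with (K*(t*t)+K*(t*t)) by ring|]; apply abs_sub_le; auto. }
    pose proof (abs_lb _ _ L1b).
    assert (Eid : 2*L0*t*(y - K*(t*t)) - 2*(K*(t*t))*(rho + L1*t) = rho*(2*L0*C*y - rho*rho*T))
      by (unfold t, T; ring).
    assert (0 < 2*L0*C*y - rho*rho*T).
    { assert (rho*rho*T <= rho*rho*(2*L0*C*Ga)) by (apply Rmult_le_compat_l; nra).
      assert (0 < 2*L0*C) by nra. nra. }
    assert (0 < rho*(2*L0*C*y - rho*rho*T)) by nra.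
    lra. }
  destruct (affine_pos (S1f x y) (-(y1-y1)) (x1-x2) P1) as [r1 [Hr1 R1]].
  destruct (affine_pos (S2f x y) (-(Y-y1)) (X-x1) P2) as [r2 [Hr2 R2]].
  destruct (affine_pos (S3f x y) (Y-y1) (-(X-x2)) P3) as [r3 [Hr3 R3]].
  exists (Rmin r1 (Rmin r2 r3)). split.
  { repeat apply Rmin_glb_lt; auto. }
  intros x' y' Hd.
  set (r := Rmin r1 (Rmin r2 r3)) in *.
  assert (Hr : 0 < r) by (unfold r; repeat apply Rmin_glb_lt; auto).
  assert (Hdx : Rabs (x'-x) < r).
  { rewrite <- (Rabs_pos_eq r) by lra. apply Rsqr_lt_abs_0. pose proof (Rle_0_sqr (y'-y)). unfold Rsqr in *. lra. }
  assert (Hdy : Rabs (y'-y) < r).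
  { rewrite <- (Rabs_pos_eq r) by lra. apply Rsqr_lt_abs_0. pose proof (Rle_0_sqr (x'-x)). unfold Rsqr in *. lra. }
  assert (Hr1' : r <= r1) by apply Rmin_l.
  assert (Hr2' : r <= r2) by (eapply Rle_trans; [apply Rmin_r|apply Rmin_l]).
  assert (Hr3' : r <= r3) by (eapply Rle_trans; [apply Rmin_r|apply Rmin_r]).
  assert (Q1 : 0 < S1f x' y').
  { replace (S1f x' y') with (S1f x y + -(y1-y1)*(x'-x) + (x1-x2)*(y'-y)) by (unfold S1f; ring).
    apply R1; lra. }
  assert (Q2 : 0 < S2f x' y').
  { replace (S2f x' y') with (S2f x y + -(Y-y1)*(x'-x) + (X-x1)*(y'-y)) by (unfold S2f; ring).
    apply R2; lra. }
  assert (Q3 : 0 < S3f x' y').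
  { replace (S3f x' y') with (S3f x y + (Y-y1)*(x'-x) + -(X-x2)*(y'-y)) by (unfold S3f; ring).
    apply R3; lra. }
  pose proof (Hcur t) as Sp. pose proof (Hcur (-t)) as Sm.
  replace (- t * - t) with (t*t) in Sm by ring.
  apply (tri_convex S conv x1 y1 X Y x2 y1 x' y' (S3f x' y') (S1f x' y') (S2f x' y')); auto.
  - unfold S1f, S2f, S3f. ring.
  - unfold S1f, S2f, S3f. ring.
Qed.

Lemma cabs_lt z e : 0 < e -> Re z*Re z + Im z*Im z < e*e -> Cabs z < e.
Proof.
  intros He Hz. unfold Cabs. rewrite <- (sqrt_square e) by lra.
  apply sqrt_lt_1_alt. split; [nra|auto].
Qed.

Lemma cabs_lt_inv z e : Cabs z < e -> Re z*Re z + Im z*Im z < e*e.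
Proof.
  unfold Cabs. intro H. assert (0 <= Re z*Re z + Im z*Im z) by nra.
  pose proof (sqrt_sqrt _ H0). pose proof (sqrt_pos (Re z*Re z + Im z*Im z)). nra.
Qed.

Lemma cabs1 u : Cabs u = 1 -> Re u*Re u + Im u*Im u = 1.
Proof.
  unfold Cabs. intro H. assert (0 <= Re u*Re u + Im u*Im u) by nra.
  rewrite <- (sqrt_sqrt _ H0), H. ring.
Qed.

Lemma ccl_of (S : Cx -> Prop) z : S z -> Ccl S z.
Proof.
  intros Hz e He. exists z. split; auto. apply cabs_lt; auto. simpl. nra.
Qed.

Lemma recon l u w : Re u*Re u + Im u*Im u = 1 ->
  Cadd l (Cmul (mkC (eta_c l u w) (xi_c l u w)) u) = w.
Proof.
  intro Hu. unfold eta_c, xi_c. apply Cx_ext; simpl.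
  - transitivity (Re w + (Re w - Re l)*(Re u*Re u+Im u*Im u - 1)); [ring|rewrite Hu; ring].
  - transitivity (Im w + (Im w - Im l)*(Re u*Re u+Im u*Im u - 1)); [ring|rewrite Hu; ring].
Qed.

Lemma lin0 a k G : 0 < G -> (forall t, 0 <= (t*a + t*t*k)/(1+t*t*G)) -> a = 0.
Proof.
  intros HG Ht. destruct (Req_dec a 0) as [|Ha]; auto. exfalso.
  set (K := Rabs k + 1). assert (HK : 0 < K) by (unfold K; pose proof (Rabs_pos k); lra).
  set (t := - a / (2*K)).
  specialize (Ht t).
  assert (HD : 0 < 1 + t*t*G) by nra.
  assert (H1 : 0 <= t*a + t*t*k).
  { replace (t*a + t*t*k) with ((t*a + t*t*k)/(1+t*t*G) * (1+t*t*G)) by (field; lra). nra. }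
  assert (H2 : t*t*k <= t*t*K).
  { apply Rmult_le_compat_l; [nra|]. unfold K. pose proof (Rle_abs k). lra. }
  assert (H3 : t*a = - (a*a)/(2*K)) by (unfold t; field; lra).
  assert (H4 : t*t*K = (a*a)/(4*K)) by (unfold t; field; lra).
  assert (H5 : 0 < (a*a)/(4*K)) by (apply Rdiv_lt_0_compat; [nra|lra]).
  assert (H6 : - (a*a)/(2*K) = -2 * ((a*a)/(4*K))) by (field; lra).
  lra.
Qed.

Theorem mainTheorem2 (H : CHilbert) (D : H -> Prop) (A : H -> H) (l : Cx) :
  densely_defined_closed_operator D A ->
  (exists z : Cx, Cinterior (Num D A) z) ->
  (exists z : Cx, ~ Num D A z) ->
  Cboundary (Num D A) l ->
  infinite_upper_curvature (Ccl (Num D A)) l ->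
  Num D A l ->
  eigenvalue D A l.
Proof.
  intros HD HI _ _ HIC HN.
  destruct HD as [HS [HL [Hdense _]]].
  apply NNPP; intro Hne.
  destruct HN as [f0 [Df0 [Uf0 Qf0]]]. apply unit_inner in Uf0.
  set (v := hadd (A f0) (hopp (hscal l f0))).
  assert (Hv0 : v <> hzero).
  { intro E. apply Hne. exists f0. split; [auto|split].
    - intro Z. rewrite Z, inner0l in Uf0. injection Uf0; lra.
    - apply (sub0_eq H). exact E. }
  assert (Hvy : forall y, hinner v y = Cadd (hinner (A f0) y) (Copp (Cmul l (hinner f0 y)))).
  { intro y. unfold v. rewrite hinnerDl, inner_oppl, hinnerZl. reflexivity. }
  pose proof (inner_pos_ne H v Hv0) as Hvp.
  destruct (Hdense v (hnorm v)) as [y [Dy Hy]].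
  { unfold hnorm. apply sqrt_lt_R0. auto. }
  assert (Hvy0 : hinner v y <> C0).
  { intro Z. assert (E : Re (hinner (hsub v y) (hsub v y)) = Re (hinner v v) + Re (hinner y y)).
    { unfold hsub. rewrite hinnerDl, !innerDr, !inner_oppl, !inner_oppr, (hinner_conj H v y), Z.
      simpl. ring. }
    unfold hnorm in Hy. rewrite E in Hy.
    pose proof (hinner_pos H y).
    assert (sqrt (Re (hinner v v)) <= sqrt (Re (hinner v v) + Re (hinner y y))) by (apply sqrt_le_1_alt; lra).
    lra. }
  set (g := hadd y (hscal (Copp (hinner y f0)) f0)).
  assert (Dg : D g).
  { destruct HS as [_ [Ha Hs]]. apply Ha; auto. }
  assert (Egf : hinner g f0 = C0).
  { unfold g. rewrite hinnerDl, hinnerZl, Uf0. cx. }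
  assert (Efg : hinner f0 g = C0).
  { rewrite (hinner_conj H g f0), Egf. cx. }
  assert (Ea : hinner v g = hinner v y).
  { unfold g. rewrite innerDr, innerZr, (Hvy f0), Qf0, Uf0. cx. }
  assert (Ha0 : hinner (A f0) g <> C0).
  { intro Z. apply Hvy0. rewrite <- Ea, Hvy, Z, Efg. cx. }
  assert (Hg0 : g <> hzero).
  { intro Z. apply Ha0. rewrite Z. apply inner0r. }
  set (G := Re (hinner g g)).
  assert (HG : 0 < G) by (apply inner_pos_ne; auto).
  assert (Egg : hinner g g = mkC G 0) by (apply Cx_ext; [reflexivity|apply inner_real]).
  set (a := hinner (A f0) g) in *. set (b := hinner (A g) f0). set (d := hinner (A g) g).
  assert (Kpt : forall tau, exists z, Num D A z /\ Csub z l =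
     Cmul (mkC (/(1 + (Re tau*Re tau + Im tau*Im tau)*G)) 0)
       (Cadd (Cadd (Cmul (Cconj tau) a) (Cmul tau b)) (Cmul (Cmul tau (Cconj tau)) (Csub d (Cmul l (mkC G 0)))))).
  { intro tau. set (h := hadd (hscal Defs.C1 f0) (hscal tau g)).
    assert (Dh : D h) by (apply (D_comb H D HS); auto).
    assert (Enn : hinner h h = mkC (1 + (Re tau*Re tau + Im tau*Im tau)*G) 0).
    { unfold h. rewrite inner_comb, Uf0, Efg, Egf, Egg. apply Cx_ext; simpl; ring. }
    assert (Hpos : 0 < 1 + (Re tau*Re tau + Im tau*Im tau)*G) by nra.
    assert (Hh0 : h <> hzero).
    { intro Z. rewrite Z, inner0l in Enn. injection Enn. lra. }
    exists (Cmul (mkC (/ Re (hinner h h)) 0) (hinner (A h) h)). split.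
    - apply (num_pt H D A HS HL); auto.
    - rewrite Enn. unfold h. rewrite (A_comb H D A HS HL) by auto.
      rewrite inner_comb, Qf0. fold a b d.
      apply Cx_ext; simpl; field; lra. }
  destruct HIC as [u [[Hu1 [Hcor Hncor]] Hinf]].
  pose proof (cabs1 u Hu1) as Hu.
  assert (Heta : forall z, Num D A z -> 0 <= eta_c l u z).
  { intros z Hz. apply ccl_of in Hz. destruct (classic (corner_point (Ccl (Num D A)) l)) as [Hc|Hc].
    - destruct (Hcor Hc) as [th [[Hth0 Hth1] [Hsec _]]]. specialize (Hsec z Hz). unfold sector in Hsec.
      unfold eta_c. assert (0 <= cos th) by (apply cos_ge_0; pose proof PI_RGT_0; lra).
      assert (0 <= Cabs (Csub z l)) by apply sqrt_pos. nra.
    - destruct (Hncor Hc) as [_ Hs]. apply Hs; auto. }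
  set (w2 := Cmul (Csub d (Cmul l (mkC G 0))) (Cconj u)).
  set (w1 := fun sg => Cmul (Cadd (Cmul (Cconj sg) a) (Cmul sg b)) (Cconj u)).
  assert (Curve : forall sg t, (sg = Defs.C1 \/ sg = mkC 0 1) -> exists z, Num D A z /\
     eta_c l u z = (t*Re (w1 sg) + t*t*Re w2)/(1+t*t*G) /\
     xi_c l u z = (t*Im (w1 sg) + t*t*Im w2)/(1+t*t*G)).
  { intros sg t Hsg. destruct (Kpt (Cmul (mkC t 0) sg)) as [z [Nz Ez]]. exists z.
    split; [auto|]. unfold eta_c, xi_c. rewrite Ez. unfold w1, w2.
    assert (0 < 1 + t*t*G) by nra.
    destruct Hsg as [-> | ->]; simpl; split; field; nra. }
  assert (Re0 : forall sg, (sg = Defs.C1 \/ sg = mkC 0 1) -> Re (w1 sg) = 0).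
  { intros sg Hsg. apply (lin0 _ (Re w2) G HG). intro t.
    destruct (Curve sg t Hsg) as [z [Nz [Ee _]]]. rewrite <- Ee. apply Heta; auto. }
  assert (Hex : exists sg, (sg = Defs.C1 \/ sg = mkC 0 1) /\ Im (w1 sg) <> 0).
  { apply NNPP; intro Hn.
    assert (I1 : Im (w1 Defs.C1) = 0) by (apply NNPP; intro; apply Hn; exists Defs.C1; auto).
    assert (I2 : Im (w1 (mkC 0 1)) = 0) by (apply NNPP; intro; apply Hn; exists (mkC 0 1); auto).
    pose proof (Re0 Defs.C1 (or_introl eq_refl)) as R1.
    pose proof (Re0 (mkC 0 1) (or_intror eq_refl)) as R2.
    assert (X1 : Re (w1 Defs.C1) = (Re a + Re b)*Re u + (Im a + Im b)*Im u) by (unfold w1; simpl; ring).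
    assert (X2 : Im (w1 Defs.C1) = (Im a + Im b)*Re u - (Re a + Re b)*Im u) by (unfold w1; simpl; ring).
    assert (X3 : Re (w1 (mkC 0 1)) = (Im a - Im b)*Re u + (Re b - Re a)*Im u) by (unfold w1; simpl; ring).
    assert (X4 : Im (w1 (mkC 0 1)) = (Re b - Re a)*Re u - (Im a - Im b)*Im u) by (unfold w1; simpl; ring).
    destruct (solve2 (Re a + Re b) (Im a + Im b) (Re u) (Im u) 0) as [Y1 Y2]; try lra.
    destruct (solve2 (Im a - Im b) (Re b - Re a) (Re u) (Im u) 0) as [Y3 Y4]; try lra.
    apply Ha0. apply Cx_ext; simpl; lra. }
  destruct Hex as [sg [Hsg Hlne]].
  set (ll := Im (w1 sg)) in *. set (m := Im w2). set (k := Re w2).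
  set (S := fun x y => Num D A (Cadd l (Cmul (mkC y x) u))).
  assert (conv : convexS S).
  { intros x1 y1 x2 y2 s0 S1 S2 Hs0. pose proof (num_seg H D A HS HL _ _ s0 S1 S2 Hs0) as F.
    unfold S. replace (Cadd l (Cmul (mkC (y1 + s0 * (y2 - y1)) (x1 + s0 * (x2 - x1))) u)) with
      (Cadd (Cadd l (Cmul (mkC y1 x1) u)) (Cmul (mkC s0 0) (Csub (Cadd l (Cmul (mkC y2 x2) u)) (Cadd l (Cmul (mkC y1 x1) u)))))
      by cx. exact F. }
  assert (Hcur : forall t, S ((t*Rabs ll + t*t*m)/(1+t*t*G)) (t*t*k/(1+t*t*G))).
  { intro t. destruct (Rlt_or_le 0 ll) as [Hp|Hp].
    - destruct (Curve sg t Hsg) as [z [Nz [E1 E2]]]. unfold S.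
      rewrite <- (recon l u z Hu) in Nz. rewrite E1, E2, (Re0 sg Hsg) in Nz. fold ll m k in Nz.
      rewrite Rabs_pos_eq by lra.
      replace ((t * 0 + t * t * k) / (1 + t * t * G)) with (t * t * k / (1 + t * t * G)) in Nz by (field; nra).
      exact Nz.
    - destruct (Curve sg (-t) Hsg) as [z [Nz [E1 E2]]]. unfold S.
      rewrite <- (recon l u z Hu) in Nz. rewrite E1, E2, (Re0 sg Hsg) in Nz. fold ll m k in Nz.
      rewrite Rabs_left by lra.
      replace ((- t * 0 + - t * - t * k) / (1 + - t * - t * G)) with (t * t * k / (1 + t * t * G)) in Nz by (field; nra).
      replace ((- t * ll + - t * - t * m) / (1 + - t * - t * G)) with ((t * - ll + t * t * m) / (1 + t * t * G)) in Nz by (field; nra).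
      exact Nz. }
  destruct HI as [z0 [e0 [He0 Hball]]].
  set (X := xi_c l u z0). set (Y := eta_c l u z0).
  assert (SZ : S X Y) by (unfold S, X, Y; rewrite (recon l u z0 Hu); apply Hball; apply cabs_lt; auto; simpl; nra).
  assert (HY : 0 < Y).
  { set (z' := Csub z0 (Cmul (mkC (e0/2) 0) u)).
    assert (Nz' : Num D A z').
    { apply Hball. apply cabs_lt; auto. unfold z'. simpl.
      apply Rle_lt_trans with ((e0/2)*(e0/2)*(Re u*Re u + Im u*Im u)); [right; ring|]. rewrite Hu. nra. }
    apply Heta in Nz'.
    assert (eta_c l u z' = Y - e0/2 * (Re u*Re u + Im u*Im u)) by (unfold z', Y, eta_c; simpl; ring).
    rewrite Hu in H0. lra. }
  assert (Hlpos : 0 < Rabs ll) by (apply Rabs_pos_lt; auto).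
  destruct (geo S conv (Rabs ll) m k G X Y Hlpos HG HY Hcur SZ) as [M [eps [Heps Hgeo]]].
  assert (Fin : forall w, Cboundary (Ccl (Num D A)) w -> xi_c l u w <> 0 ->
     (xi_c l u w)^2 + (eta_c l u w)^2 <= eps^2 -> M < eta_c l u w / (xi_c l u w)^2 -> False).
  { intros w [_ Hnint] Hx0 Hxy HM.
    assert (Hxx : 0 < xi_c l u w * xi_c l u w) by (destruct (Rlt_or_le (xi_c l u w) 0); nra).
    destruct (Hgeo (xi_c l u w) (eta_c l u w)) as [r [Hr Hrb]].
    - auto.
    - simpl in Hxy. nra.
    - replace ((xi_c l u w)^2) with (xi_c l u w * xi_c l u w) in HM by ring.
      apply Rmult_lt_compat_r with (r := xi_c l u w * xi_c l u w) in HM; auto.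
      unfold Rdiv in HM. rewrite Rmult_assoc, Rinv_l in HM by lra. lra.
    - apply Hnint. exists r. split; auto. intros w' Hw'. apply ccl_of.
      rewrite <- (recon l u w' Hu). apply Hrb.
      apply cabs_lt_inv in Hw'.
      apply Rle_lt_trans with ((Re (Csub w' w) * Re (Csub w' w) + Im (Csub w' w) * Im (Csub w' w)) *
                    (Re u*Re u + Im u*Im u)).
      + right. unfold xi_c, eta_c. simpl. ring.
      + rewrite Hu. lra. }
  destruct Hinf as [Hp|Hp]; destruct (Hp M eps Heps) as [w [Hb [Hx [Hxy HM]]]];
    apply (Fin w); auto; lra.
Qed.
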